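(* Let \(k\ge0\), \(\lambda=(\lambda_1\ge\dots\ge\lambda_k\ge0)\), and let \(J=(j_0<\dots<j_{r-1})\) be a strictly increasing sequence of non-negative integers of length \(r\ge k\) with \(J\succeq_k\lambda\). Then \(N_k(J)\ge|\lambda|\), with equality if and only if \(r=k\) and \(J=J^{(k)}_\lambda\).
   Context: \(|\lambda|=\lambda_1+\dots+\lambda_k\). \(J\succeq_k\lambda\) means \(j_{r-i}\ge\lambda_i+k-i\) for \(i=1,\dots,k\). \(J^{(k)}_\lambda=(\lambda_k,\lambda_{k-1}+1,\dots,\lambda_1+k-1)\). \(N_k(J)=r(r-k)+\sum_{q=0}^{r-1}(j_q-q)\). *)

(* Defs.v *)
From mathcomp Require Import all_boot all_order all_algebra.
Set Implicit Arguments. Unset Strict Implicit. Unset Printing Implicit Defensive.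
Import GRing.Theory Num.Theory.

(* Partitions lambda = (lambda_1 >= ... >= lambda_k >= 0) are sequences of nat,
   lambda_i = nth 0 lambda (i-1).  J = (j_0 < ... < j_{r-1}), j_q = nth 0 J q. *)

Definition is_partition (k : nat) (lambda : seq nat) : bool :=
  (size lambda == k) && sorted geq lambda.

Definition strictly_increasing (J : seq nat) : bool := sorted ltn J.

Definition weight (lambda : seq nat) : nat := sumn lambda.

Definition dominates (k : nat) (J lambda : seq nat) : Prop :=
  forall i, 1 <= i <= k ->
    nth 0 lambda (i - 1) + k - i <= nth 0 J (size J - i).

Definition Jk (k : nat) (lambda : seq nat) : seq nat :=
  mkseq (fun q => nth 0 lambda (k - 1 - q) + q) k.

Definition Nk (k : nat) (J : seq nat) : int :=
  let r := size J in
  (r%:Z * (r%:Z - k%:Z) + \sum_(q < r) ((nth 0 J q)%:Z - q%:Z))%R.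

(* Main.v *)
Require Import Defs.
From mathcomp Require Import all_boot all_order all_algebra.
From mathcomp Require Import zify ring.
Import GRing.Theory Num.Theory.

Section H.
Local Open Scope ring_scope.

Lemma sorted_ge_idx (J : seq nat) : sorted ltn J ->
  forall q, (q < size J)%N -> (q <= nth 0 J q)%N.
Proof.
move=> sJ; elim=> [|q IH] hq //.
have h1 := IH (ltnW hq).
have h2 : (nth 0 J q < nth 0 J q.+1)%N.
  by apply: (sorted_ltn_nth ltn_trans) => //; rewrite inE // ltnW.
lia.
Qed.

Lemma weight_rev (k : nat) (lambda : seq nat) : size lambda = k ->
  (weight lambda)%:Z = (\sum_(t < k) (nth 0 lambda (k - 1 - t))%:Z)%R.
Proof.
move=> sl; rewrite /weight sumnE (big_nth 0) sl big_rev_mkord subn0.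
rewrite (big_morph Posz PoszD (erefl _)).
by apply: eq_bigr => t _; congr (Posz (nth _ _ _)); lia.
Qed.

End H.

Theorem lemma4p15 (k : nat) (lambda J : seq nat) :
  is_partition k lambda ->
  strictly_increasing J ->
  k <= size J ->
  dominates k J lambda ->
  (Posz (weight lambda) <= Nk k J)%R /\
  (Nk k J = Posz (weight lambda) <-> (size J = k /\ J = Jk k lambda)).
Proof.
Local Open Scope ring_scope.
move=> /andP[/eqP sl _] sJ hk dom.
set m := (size J - k)%N.
have hr : size J = (m + k)%N by rewrite /m subnK.
pose S1 := (\sum_(q < m) ((nth 0%N J q)%:Z - q%:Z))%R.
pose d := fun t : nat => ((nth 0%N J (m + t))%:Z - (nth 0%N lambda (k - 1 - t))%:Z - t%:Z)%R.
pose D := (\sum_(t < k) d t)%R.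
have ident : Nk k J = (m%:Z * m%:Z + S1 + D + (weight lambda)%:Z)%R.
  rewrite /Nk hr big_split_ord /= (@weight_rev k lambda sl).
  have -> : (\sum_(i < k) ((nth 0 J (m + i))%:Z - (m + i)%:Z))%R
     = (D + \sum_(t < k) (nth 0 lambda (k - 1 - t))%:Z - \sum_(t < k) m%:Z)%R.
    rewrite /D -big_split -sumrB /=; apply: eq_bigr => t _; rewrite /d.
    rewrite PoszD; ring.
  rewrite sumr_const card_ord -mulr_natr PoszD -/S1 natz.
  ring.
have S1ge : 0 <= S1.
  apply: sumr_ge0 => q _; rewrite subr_ge0 lez_nat.
  have hq : (q < size J)%N by rewrite hr; have := ltn_ord q; lia.
  exact: (@sorted_ge_idx J sJ q hq).
have dge : forall t : 'I_k, 0 <= d t.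
  move=> t; have := dom (k - t)%N; rewrite /d.
  have ht := ltn_ord t.
  have -> : (size J - (k - t))%N = (m + t)%N by rewrite hr; lia.
  have -> : (k - t - 1)%N = (k - 1 - t)%N by lia.

  move=> /(_ ltac:(lia)) h.
  lia.
have Dge : 0 <= D by apply: sumr_ge0 => t _; apply: dge.
have mm : 0 <= Posz m * Posz m by apply: mulr_ge0.
split; first by rewrite ident; lia.
split.
- rewrite ident => heq.
  have hm : Posz m * Posz m = 0 by lia.
  have hD : D = 0 by lia.
  have m0 : m = 0%N by move: hm; rewrite -PoszM => -[]; lia.
  have hk' : size J = k by rewrite hr m0.
  split=> //.
  have dz := psumr_eq0P (fun t _ => dge t) hD.
  apply: (@eq_from_nth _ 0%N); first by rewrite size_mkseq.
  move=> q; rewrite hk' => hq.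
  rewrite nth_mkseq //.
  have := dz (Ordinal hq) isT; rewrite /d /= m0 add0n.
  lia.
- move=> [hk' hJ].
  have m0 : m = 0%N by rewrite /m hk' subnn.
  have S10 : S1 = 0 by rewrite /S1 m0 big_ord0.
  have D0 : D = 0.
    apply: big1 => t _; rewrite /d m0 add0n {1}hJ nth_mkseq //.
    rewrite PoszD; ring.
  by rewrite ident S10 D0 m0; ring.
Qed.
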